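(* Let $\Gamma$ be a represented pointclass satisfying the standing assumptions and (uniformly computably) closed under the operation $(A_n)_{n\in\mathbb{N}}\mapsto\{01^\mathbb{N}\}\cup\bigcup_{n\in\mathbb{N}}1^n0A_n$. Then $\mathrm{FindWS}_\Gamma\equiv_W\widehat{\mathrm{FindWS}_\Gamma}$.
   Context: $f\leq_W g$ iff there are computable partial $K,H:\subseteq\mathbb{N}^\mathbb{N}\to\mathbb{N}^\mathbb{N}$ such that for every realizer $G$ of $g$, $p\mapsto K(\langle p,G(H(p))\rangle)$ realizes $f$; $\equiv_W$ induced equivalence. $\widehat{f}(x_0,x_1,\ldots)=(f(x_0),f(x_1),\ldots)$. Win/lose games: players 1,2, choices $\{0,1\}$, turn function $d:\{0,1\}^*\to\{1,2\}$ (lookup table), winning set for player 1 (complement for player 2); $wA=\{wp\mid p\in A\}$. $\mathrm{FindWS}_\Gamma$: input a win/lose game whose player-1 winning set is given by a $\Gamma$-name and in which player 1 has a winning strategy; output a strategy profile ($\{0,1\}^*\to\{0,1\}$) in which one strategy is winning (necessarily player 1's). Standing assumptions on a represented pointclass $\Gamma$ of subsets of $\{0,1\}^\mathbb{N}$: every win/lose game with player-1 winning set in $\Gamma$ is determined; $\emptyset,\{0,1\}^\mathbb{N}\in\Gamma$; $\Gamma$ is uniformly computably closed under rescaling $(w,A)\mapsto wA$ and its inverse and under intersection with clopen sets. *)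

(* Defs.v *)
From Stdlib Require Import List Arith Bool.
Import ListNotations.

Definition baire := nat -> nat.
Definition cantor := nat -> bool.

(* Oracle (relative) mu-recursive functions: Kleene's schemes plus an
   oracle primitive.  [eval p e xs v] : the code [e], run on arguments [xs]
   with oracle [p], halts with value [v]. *)
Inductive rf : Type :=
| rfZero : rf
| rfSucc : rf
| rfProj : nat -> rf
| rfOracle : rf
| rfComp : rf -> list rf -> rf
| rfPrimRec : rf -> rf -> rf
| rfMu : rf -> rf.

Inductive eval (p : baire) : rf -> list nat -> nat -> Prop :=
| ev_zero : forall xs, eval p rfZero xs 0
| ev_succ : forall x xs, eval p rfSucc (x :: xs) (S x)
| ev_proj : forall i xs v, nth_error xs i = Some v -> eval p (rfProj i) xs v
| ev_oracle : forall x xs, eval p rfOracle (x :: xs) (p x)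
| ev_comp : forall f gs xs ys v,
    eval_list p gs xs ys -> eval p f ys v -> eval p (rfComp f gs) xs v
| ev_rec0 : forall f g xs v, eval p f xs v -> eval p (rfPrimRec f g) (0 :: xs) v
| ev_recS : forall f g n xs w v,
    eval p (rfPrimRec f g) (n :: xs) w -> eval p g (n :: w :: xs) v ->
    eval p (rfPrimRec f g) (S n :: xs) v
| ev_mu : forall f xs n,
    eval p f (n :: xs) 0 ->
    (forall m, m < n -> exists k, eval p f (m :: xs) (S k)) ->
    eval p (rfMu f) xs n
with eval_list (p : baire) : list rf -> list nat -> list nat -> Prop :=
| evl_nil : forall xs, eval_list p [] xs []
| evl_cons : forall g gs xs y ys,
    eval p g xs y -> eval_list p gs xs ys -> eval_list p (g :: gs) xs (y :: ys).

(* Partial functions on Baire space: [F p = None] means p is outside dom F. *)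
Definition pfun := baire -> option baire.

Definition computable (F : pfun) : Prop :=
  exists e : rf, forall p q, F p = Some q -> forall n, eval p e [n] (q n).

Definition join (p q : baire) : baire :=
  fun n => if Nat.even n then p (Nat.div2 n) else q (Nat.div2 n).
Definition lhalf (r : baire) : baire := fun n => r (2 * n).
Definition rhalf (r : baire) : baire := fun n => r (2 * n + 1).
Definition cpair (i n : nat) : nat := (i + n) * (i + n + 1) / 2 + n.
Definition component (r : baire) (i : nat) : baire := fun n => r (cpair i n).

Record rep_space := { carrier : Type; rep : baire -> carrier -> Prop }.

Definition prod_space (X Y : rep_space) : rep_space :=
  {| carrier := (carrier X * carrier Y)%type;
     rep := fun r xy => rep X (lhalf r) (fst xy) /\ rep Y (rhalf r) (snd xy) |}.

Definition seq_space (X : rep_space) : rep_space :=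
  {| carrier := nat -> carrier X;
     rep := fun r xs => forall i, rep X (component r i) (xs i) |}.

(* multi-valued f :⊆ X ⇉ Y ; dom f = { x | exists y, f x y } *)
Definition mvf (X Y : rep_space) := carrier X -> carrier Y -> Prop.

Definition realizes {X Y : rep_space} (f : mvf X Y) (F : pfun) : Prop :=
  forall p x, rep X p x -> (exists y, f x y) ->
    exists q, F p = Some q /\ exists y, rep Y q y /\ f x y.

Definition pcomp (F G : pfun) : pfun :=
  fun p => match G p with Some q => F q | None => None end.

Definition weihrauch_le {X Y U V : rep_space} (f : mvf X Y) (g : mvf U V) : Prop :=
  exists K H : pfun, computable K /\ computable H /\
    forall G : pfun, realizes g G ->
      realizes f (fun p => match pcomp G H p with
                           | Some q => K (join p q)
                           | None => None end).

Definition weihrauch_equiv {X Y U V : rep_space} (f : mvf X Y) (g : mvf U V) : Prop :=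
  weihrauch_le f g /\ weihrauch_le g f.

Definition parallelization {X Y : rep_space} (f : mvf X Y)
  : mvf (seq_space X) (seq_space Y) :=
  fun xs ys => forall i, f (xs i) (ys i).

Definition computable_op {X Y : rep_space} (op : carrier X -> carrier Y) : Prop :=
  exists F : pfun, computable F /\
    forall p x, rep X p x -> exists q, F p = Some q /\ rep Y q (op x).

(* Finite words over {0,1} (false = 0, true = 1), first letter first *)
Definition word := list bool.

Fixpoint wcode (w : word) : nat :=
  match w with [] => 0 | b :: w' => 2 * wcode w' + (if b then 2 else 1) end.

Definition prefix (k : nat) (x : cantor) : word := map x (seq 0 k).

Definition bit (b : bool) : nat := if b then 1 else 0.

Definition word_space : rep_space :=
  {| carrier := word;
     rep := fun p w => p 0 = length w /\
                       forall i, i < length w -> p (S i) = bit (nth i w false) |}.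

(* clopen subsets of Cantor space: name p gives a depth p 0 and a truth
   table over words of that length *)
Definition clopen_space : rep_space :=
  {| carrier := cantor -> Prop;
     rep := fun p C => forall x, C x <-> p (S (wcode (prefix (p 0) x))) <> 0 |}.

Definition prepend (w : word) (x : cantor) : cantor :=
  fun n => if n <? length w then nth n w false else x (n - length w).
Definition shift (k : nat) (x : cantor) : cantor := fun n => x (k + n).

Definition rescale (wA : word * (cantor -> Prop)) : cantor -> Prop :=
  fun x => prefix (length (fst wA)) x = fst wA /\ snd wA (shift (length (fst wA)) x).
Definition unscale (wB : word * (cantor -> Prop)) : cantor -> Prop :=
  fun x => snd wB (prepend (fst wB) x).
Definition clopen_inter (CA : (cantor -> Prop) * (cantor -> Prop)) : cantor -> Prop :=
  fun x => fst CA x /\ snd CA x.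

Definition tree_op (As : nat -> cantor -> Prop) : cantor -> Prop :=
  fun x => (x 0 = false /\ forall k, x (S k) = true) \/
           exists n, (forall i, i < n -> x i = true) /\ x n = false /\
                     As n (shift (S n) x).

(* Win/lose games.  Turn function d : {0,1}^* -> {1,2} encoded as
   d w = true (player 1 moves) / false (player 2 moves). *)
Definition turnfun := word -> bool.
Definition strategy := word -> bool.

Fixpoint history (d : turnfun) (s1 s2 : strategy) (n : nat) : word :=
  match n with
  | 0 => []
  | S m => let h := history d s1 s2 m in
           h ++ [if d h then s1 h else s2 h]
  end.

Definition play (d : turnfun) (s1 s2 : strategy) : cantor :=
  fun n => let h := history d s1 s2 n in if d h then s1 h else s2 h.

Definition winning1 (d : turnfun) (A : cantor -> Prop) (s : strategy) : Prop :=
  forall t, A (play d s t).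
Definition winning2 (d : turnfun) (A : cantor -> Prop) (t : strategy) : Prop :=
  forall s, ~ A (play d s t).

Definition pointclass_name := baire -> (cantor -> Prop) -> Prop.

Definition gamma_space (nm : pointclass_name) : rep_space :=
  {| carrier := cantor -> Prop; rep := nm |}.

Definition turn_space : rep_space :=
  {| carrier := turnfun; rep := fun p d => forall w, d w = Nat.eqb (p (wcode w)) 0 |}.

Definition game_space (nm : pointclass_name) : rep_space :=
  prod_space turn_space (gamma_space nm).

Definition profile_space : rep_space :=
  {| carrier := strategy;
     rep := fun p s => forall w, s w = negb (Nat.eqb (p (wcode w)) 0) |}.

Definition FindWS (nm : pointclass_name) : mvf (game_space nm) profile_space :=
  fun g s => (exists s1, winning1 (fst g) (snd g) s1) /\
             (winning1 (fst g) (snd g) s \/ winning2 (fst g) (snd g) s).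

Record standing_assumptions (nm : pointclass_name) : Prop := {
  (* nm is a representation of a class of sets (up to extensional equality) *)
  sa_ext : forall p A B, nm p A -> (forall x, A x <-> B x) -> nm p B;
  sa_fun : forall p A B, nm p A -> nm p B -> forall x, A x <-> B x;
  sa_det : forall d A, (exists p, nm p A) ->
             (exists s, winning1 d A s) \/ (exists t, winning2 d A t);
  sa_empty : exists p, nm p (fun _ => False);
  sa_full : exists p, nm p (fun _ => True);
  sa_rescale : @computable_op (prod_space word_space (gamma_space nm))
                              (gamma_space nm) rescale;
  sa_unscale : @computable_op (prod_space word_space (gamma_space nm))
                              (gamma_space nm) unscale;
  sa_clopen : @computable_op (prod_space clopen_space (gamma_space nm))
                             (gamma_space nm) clopen_inter
}.

(* Main.v *)
Require Import Defs.
From Stdlib Require Import List Arith Bool Lia FunctionalExtensionality Classical IndefiniteDescription.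
Import ListNotations.


Definition cmp (k:nat) (e:rf) (f: baire -> list nat -> nat) : Prop :=
  forall p xs, k <= length xs -> eval p e xs (f p xs).

Lemma cmp_ext k e f g : cmp k e f -> (forall p xs, k <= length xs -> f p xs = g p xs) -> cmp k e g.
Proof. intros H E p xs L. rewrite <- E by exact L. apply H, L. Qed.
Lemma cmp_mono k k' e f : cmp k e f -> k <= k' -> cmp k' e f.
Proof. intros H L p xs L'. apply H. lia. Qed.
Lemma cmp_zero : cmp 0 rfZero (fun _ _ => 0).
Proof. intros p xs _. constructor. Qed.
Lemma cmp_succ : cmp 1 rfSucc (fun _ xs => S (nth 0 xs 0)).
Proof. intros p [|x xs] L; simpl in *; [lia|constructor]. Qed.
Lemma cmp_proj i : cmp (S i) (rfProj i) (fun _ xs => nth i xs 0).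
Proof. intros p xs L. constructor. apply nth_error_nth'. lia. Qed.
Lemma cmp_oracle : cmp 1 rfOracle (fun p xs => p (nth 0 xs 0)).
Proof. intros p [|x xs] L; simpl in *; [lia|constructor]. Qed.

Lemma cmp_compl k gs hs : Forall2 (fun g h => cmp k g h) gs hs ->
  forall p xs, k <= length xs -> eval_list p gs xs (map (fun h => h p xs) hs).
Proof. induction 1; intros p xs L; simpl; constructor; auto. Qed.

Lemma cmp_comp k F f gs hs : cmp (length hs) F f -> Forall2 (fun g h => cmp k g h) gs hs ->
  cmp k (rfComp F gs) (fun p xs => f p (map (fun h => h p xs) hs)).
Proof.
  intros HF HG p xs L. econstructor. apply (cmp_compl _ _ _ HG p xs L).
  apply HF. rewrite length_map. lia.
Qed.

Lemma cmp_comp1 k F f g1 h1 : cmp 1 F f -> cmp k g1 h1 ->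
  cmp k (rfComp F [g1]) (fun p xs => f p [h1 p xs]).
Proof. intros. apply (cmp_comp k F f [g1] [h1]); auto. Qed.
Lemma cmp_comp2 k F f g1 h1 g2 h2 : cmp 2 F f -> cmp k g1 h1 -> cmp k g2 h2 ->
  cmp k (rfComp F [g1;g2]) (fun p xs => f p [h1 p xs; h2 p xs]).
Proof. intros. apply (cmp_comp k F f [g1;g2] [h1;h2]); auto. Qed.
Lemma cmp_comp3 k F f g1 h1 g2 h2 g3 h3 : cmp 3 F f -> cmp k g1 h1 -> cmp k g2 h2 -> cmp k g3 h3 ->
  cmp k (rfComp F [g1;g2;g3]) (fun p xs => f p [h1 p xs; h2 p xs; h3 p xs]).
Proof. intros. apply (cmp_comp k F f [g1;g2;g3] [h1;h2;h3]); auto. Qed.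

Lemma cmp_prec k f F g G (R : baire -> nat -> list nat -> nat) :
  cmp k f F -> cmp (S (S k)) g G ->
  (forall p ys, k <= length ys -> R p 0 ys = F p ys) ->
  (forall p n ys, k <= length ys -> R p (S n) ys = G p (n :: R p n ys :: ys)) ->
  cmp (S k) (rfPrimRec f g) (fun p xs => R p (hd 0 xs) (tl xs)).
Proof.
  intros Hf Hg R0 RS p [|n ys] L; simpl in *; [lia|].
  induction n.
  - constructor. rewrite R0 by lia. apply Hf. lia.
  - econstructor. apply IHn. rewrite RS by lia. apply Hg. simpl. lia.
Qed.

Ltac mono H := eapply cmp_mono; [apply H | lia].


Ltac fin := let p := fresh in let xs := fresh in let L := fresh in
  intros p xs L; destruct xs as [|? xs]; simpl in *; try lia; try reflexivity.

Definition Padd := rfPrimRec (rfProj 0) (rfComp rfSucc [rfProj 1]).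
Lemma c_add : cmp 2 Padd (fun _ xs => nth 0 xs 0 + nth 1 xs 0).
Proof.
  eapply cmp_ext.
  - eapply (cmp_prec 1 _ _ _ _ (fun _ n ys => n + nth 0 ys 0)).
    + apply cmp_proj.
    + eapply cmp_comp1. apply cmp_succ. mono cmp_proj.
    + reflexivity.
    + reflexivity.
  - fin.
Qed.

Definition Ppred := rfPrimRec rfZero (rfProj 0).
Lemma c_pred : cmp 1 Ppred (fun _ xs => pred (nth 0 xs 0)).
Proof.
  eapply cmp_ext.
  - eapply (cmp_prec 0 _ _ _ _ (fun _ n ys => pred n)).
    + apply cmp_zero.
    + mono cmp_proj.
    + reflexivity.
    + reflexivity.
  - fin.
Qed.

Definition Psub := rfPrimRec (rfProj 0) (rfComp Ppred [rfProj 1]).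
Lemma c_sub : cmp 2 Psub (fun _ xs => nth 1 xs 0 - nth 0 xs 0).
Proof.
  eapply cmp_ext.
  - eapply (cmp_prec 1 _ _ _ _ (fun _ n ys => nth 0 ys 0 - n)).
    + apply cmp_proj.
    + eapply cmp_comp1. apply c_pred. mono cmp_proj.
    + intros; simpl; lia.
    + intros; simpl; lia.
  - fin.
Qed.

Definition Pone := rfComp rfSucc [rfZero].
Lemma c_one : cmp 0 Pone (fun _ _ => 1).
Proof. eapply cmp_ext. eapply cmp_comp1. apply cmp_succ. apply cmp_zero. fin. Qed.

Definition Pifz := rfPrimRec (rfProj 0) (rfProj 3).
Lemma c_ifz : cmp 3 Pifz (fun _ xs => match nth 0 xs 0 with 0 => nth 1 xs 0 | S _ => nth 2 xs 0 end).
Proof.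
  eapply cmp_ext.
  - eapply (cmp_prec 2 _ _ _ _ (fun _ n ys => match n with 0 => nth 0 ys 0 | S _ => nth 1 ys 0 end)).
    + mono cmp_proj.
    + apply cmp_proj.
    + reflexivity.
    + reflexivity.
  - fin.
Qed.

Definition Pisz := rfPrimRec Pone rfZero.
Lemma c_isz : cmp 1 Pisz (fun _ xs => match nth 0 xs 0 with 0 => 1 | S _ => 0 end).
Proof.
  eapply cmp_ext.
  - eapply (cmp_prec 0 _ _ _ _ (fun _ n ys => match n with 0 => 1 | S _ => 0 end)).
    + apply c_one.
    + mono cmp_zero.
    + reflexivity.
    + reflexivity.
  - fin.
Qed.

Definition Podd := rfPrimRec rfZero (rfComp Pisz [rfProj 1]).
Lemma c_odd : cmp 1 Podd (fun _ xs => Nat.b2n (Nat.odd (nth 0 xs 0))).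
Proof.
  eapply cmp_ext.
  - eapply (cmp_prec 0 _ _ _ _ (fun _ n ys => Nat.b2n (Nat.odd n))).
    + apply cmp_zero.
    + eapply cmp_comp1. apply c_isz. mono cmp_proj.
    + reflexivity.
    + intros; simpl. rewrite Nat.odd_succ, <- Nat.negb_odd.
      destruct (Nat.odd n); reflexivity.
  - fin.
Qed.

Lemma div2_S m : Nat.div2 (S m) = Nat.div2 m + Nat.b2n (Nat.odd m).
Proof.
  pose proof (Nat.div2_odd m) as H1. pose proof (Nat.div2_odd (S m)) as H2.
  rewrite Nat.odd_succ, <- Nat.negb_odd in H2.
  destruct (Nat.odd m); simpl in *; lia.
Qed.

Definition Pdiv2 := rfPrimRec rfZero (rfComp Padd [rfProj 1; rfComp Podd [rfProj 0]]).
Lemma c_div2 : cmp 1 Pdiv2 (fun _ xs => Nat.div2 (nth 0 xs 0)).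
Proof.
  eapply cmp_ext.
  - eapply (cmp_prec 0 _ _ _ _ (fun _ n ys => Nat.div2 n)).
    + apply cmp_zero.
    + eapply cmp_comp2. apply c_add. mono cmp_proj.
      eapply cmp_comp1. apply c_odd. mono cmp_proj.
    + reflexivity.
    + intros; simpl. apply div2_S.
  - fin.
Qed.

Definition Pdbl := rfComp Padd [rfProj 0; rfProj 0].
Lemma c_dbl : cmp 1 Pdbl (fun _ xs => 2 * nth 0 xs 0).
Proof. eapply cmp_ext. eapply cmp_comp2. apply c_add. apply cmp_proj. apply cmp_proj. intros; simpl; lia. Qed.

Definition Pleb := rfComp Pisz [rfComp Psub [rfProj 1; rfProj 0]].
Lemma c_leb : cmp 2 Pleb (fun _ xs => if nth 0 xs 0 <=? nth 1 xs 0 then 1 else 0).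
Proof.
  eapply cmp_ext. eapply cmp_comp1. apply c_isz.
  eapply cmp_comp2. apply c_sub. apply cmp_proj. mono cmp_proj.
  intros; simpl. destruct (Nat.leb_spec (nth 0 xs 0) (nth 1 xs 0)).
  replace (nth 0 xs 0 - nth 1 xs 0) with 0 by lia. reflexivity.
  destruct (nth 0 xs 0 - nth 1 xs 0) eqn:E; [lia|reflexivity].
Qed.

Fixpoint tri s := match s with 0 => 0 | S m => tri m + S m end.
Definition Ptri := rfPrimRec rfZero (rfComp Padd [rfProj 1; rfComp rfSucc [rfProj 0]]).
Lemma c_tri : cmp 1 Ptri (fun _ xs => tri (nth 0 xs 0)).
Proof.
  eapply cmp_ext.
  - eapply (cmp_prec 0 _ _ _ _ (fun _ n ys => tri n)).
    + apply cmp_zero.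
    + eapply cmp_comp2. apply c_add. mono cmp_proj.
      eapply cmp_comp1. apply cmp_succ. mono cmp_proj.
    + reflexivity.
    + reflexivity.
  - fin.
Qed.

Fixpoint cntle j N := match j with 0 => 0 | S t => cntle t N + (if tri (S t) <=? N then 1 else 0) end.
Definition Pcntle := rfPrimRec rfZero (rfComp Padd [rfProj 1;
   rfComp Pleb [rfComp Ptri [rfComp rfSucc [rfProj 0]]; rfProj 2]]).
Lemma c_cntle : cmp 2 Pcntle (fun _ xs => cntle (nth 0 xs 0) (nth 1 xs 0)).
Proof.
  eapply cmp_ext.
  - eapply (cmp_prec 1 _ _ _ _ (fun _ n ys => cntle n (nth 0 ys 0))).
    + mono cmp_zero.
    + eapply cmp_comp2. apply c_add. mono cmp_proj.
      eapply cmp_comp2. apply c_leb.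
      eapply cmp_comp1. apply c_tri. eapply cmp_comp1. apply cmp_succ. mono cmp_proj.
      apply cmp_proj.
    + reflexivity.
    + reflexivity.
  - fin.
Qed.

Definition sdiag N := cntle N N.
Definition usnd N := N - tri (sdiag N).
Definition ufst N := sdiag N - usnd N.

Definition Psdiag := rfComp Pcntle [rfProj 0; rfProj 0].
Lemma c_sdiag : cmp 1 Psdiag (fun _ xs => sdiag (nth 0 xs 0)).
Proof. eapply cmp_ext. eapply cmp_comp2. apply c_cntle. apply cmp_proj. apply cmp_proj. fin. Qed.
Definition Pusnd := rfComp Psub [rfComp Ptri [Psdiag]; rfProj 0].
Lemma c_usnd : cmp 1 Pusnd (fun _ xs => usnd (nth 0 xs 0)).
Proof. eapply cmp_ext. eapply cmp_comp2. apply c_sub. eapply cmp_comp1. apply c_tri. apply c_sdiag. apply cmp_proj. fin. Qed.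
Definition Pufst := rfComp Psub [Pusnd; Psdiag].
Lemma c_ufst : cmp 1 Pufst (fun _ xs => ufst (nth 0 xs 0)).
Proof. eapply cmp_ext. eapply cmp_comp2. apply c_sub. apply c_usnd. apply c_sdiag. fin. Qed.
Definition Pcpair := rfComp Padd [rfComp Ptri [rfComp Padd [rfProj 0; rfProj 1]]; rfProj 1].
Lemma c_cpair : cmp 2 Pcpair (fun _ xs => tri (nth 0 xs 0 + nth 1 xs 0) + nth 1 xs 0).
Proof. eapply cmp_ext. eapply cmp_comp2. apply c_add. eapply cmp_comp1. apply c_tri.
  eapply cmp_comp2. apply c_add. mono cmp_proj. apply cmp_proj. apply cmp_proj. fin. Qed.

Lemma tri2 s : 2 * tri s = s * (s + 1).
Proof. induction s; [reflexivity|]. change (tri (S s)) with (tri s + S s). rewrite Nat.mul_add_distr_l, IHs. ring. Qed.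
Lemma tri_div s : s * (s + 1) / 2 = tri s.
Proof. rewrite <- tri2. rewrite Nat.mul_comm. apply Nat.div_mul. lia. Qed.
Lemma cpair_tri i n : cpair i n = tri (i + n) + n.
Proof. unfold cpair. rewrite tri_div. reflexivity. Qed.
Lemma tri_mono a b : a <= b -> tri a <= tri b.
Proof. induction 1; simpl; lia. Qed.
Lemma tri_ge s : s <= tri s.
Proof. induction s; simpl; lia. Qed.

Lemma cntle_spec s N j : (forall t, t < j -> (tri (S t) <= N <-> t < s)) -> cntle j N = Nat.min j s.
Proof.
  induction j; intros H; [reflexivity|].
  change (cntle (S j) N) with (cntle j N + (if tri (S j) <=? N then 1 else 0)).
  rewrite IHj by (intros; apply H; lia).
  destruct (Nat.leb_spec (tri (S j)) N) as [h|h].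
  - apply H in h; lia.
  - assert (~ j < s) by (intro c; apply H in c; lia; lia). lia.
Qed.

Lemma sdiag_cpair i n : sdiag (cpair i n) = i + n.
Proof.
  rewrite cpair_tri. unfold sdiag. rewrite (cntle_spec (i+n)).
  - pose proof (tri_ge (i+n)). lia.
  - intros t _. split; intro h.
    + destruct (Nat.lt_ge_cases t (i+n)) as [|g]; auto.
      assert (HH: tri (S (i+n)) <= tri (S t)) by (apply tri_mono; lia).
      change (tri (S (i+n))) with (tri (i+n) + S (i+n)) in HH. lia.
    + assert (tri (S t) <= tri (i+n)) by (apply tri_mono; lia). lia.
Qed.
Lemma usnd_cpair i n : usnd (cpair i n) = n.
Proof. unfold usnd. rewrite sdiag_cpair, cpair_tri. lia. Qed.
Lemma ufst_cpair i n : ufst (cpair i n) = i.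
Proof. unfold ufst. rewrite usnd_cpair, sdiag_cpair. lia. Qed.


Fixpoint subst (e eg : rf) : rf := match e with
 | rfOracle => rfComp eg [rfProj 0]
 | rfComp f gs => rfComp (subst f eg) (map (fun g => subst g eg) gs)
 | rfPrimRec f g => rfPrimRec (subst f eg) (subst g eg)
 | rfMu f => rfMu (subst f eg)
 | x => x end.

Section RI.
Variable P : rf -> Prop.
Hypothesis H0 : P rfZero.
Hypothesis H1 : P rfSucc.
Hypothesis H2 : forall i, P (rfProj i).
Hypothesis H3 : P rfOracle.
Hypothesis H4 : forall f gs, P f -> Forall P gs -> P (rfComp f gs).
Hypothesis H5 : forall f g, P f -> P g -> P (rfPrimRec f g).
Hypothesis H6 : forall f, P f -> P (rfMu f).
Fixpoint rf_ind2 (e : rf) : P e :=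
  match e with
  | rfZero => H0 | rfSucc => H1 | rfProj i => H2 i | rfOracle => H3
  | rfComp f gs => H4 f gs (rf_ind2 f)
      ((fix F l := match l return Forall P l with
                   | [] => Forall_nil _
                   | g :: l' => Forall_cons _ (rf_ind2 g) (F l') end) gs)
  | rfPrimRec f g => H5 f g (rf_ind2 f) (rf_ind2 g)
  | rfMu f => H6 f (rf_ind2 f)
  end.
End RI.

Lemma subst_ok (p q : baire) (eg : rf) :
  (forall n, eval p eg [n] (q n)) ->
  forall e xs v, eval q e xs v -> eval p (subst e eg) xs v.
Proof.
  intros Hg e. induction e using rf_ind2; intros xs v Hev; simpl.
  - inversion Hev; subst; constructor.
  - inversion Hev; subst; constructor.
  - inversion Hev; subst; constructor; auto.
  - inversion Hev; subst. econstructor.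
    + constructor. constructor. reflexivity. constructor.
    + apply Hg.
  - inversion Hev as [| | | |f0 gs0 xs0 ys v0 Hl Hf| | | ]; subst.
    econstructor; [|apply IHe; exact Hf].
    clear Hev Hf. induction Hl; simpl; constructor.
    + inversion H; subst. auto.
    + inversion H; subst. auto.
  - destruct xs as [|n xs]; [inversion Hev|].
    revert v Hev. induction n; intros v Hev; inversion Hev; subst.
    + constructor. auto.
    + econstructor; eauto.
  - inversion Hev as [| | | | | | |f0 xs0 n0 Hz Hlt]; subst. constructor; auto.
    intros m Hm. destruct (Hlt m Hm) as [k Hk]. exists k. auto.
Qed.



Definition strip c := match c with 0 => 0 | S _ => if Nat.odd c then c else pred (Nat.div2 c) end.
Definition Pstrip := rfComp Pifz [rfProj 0; rfZero; rfComp Pifz [Podd; rfComp Ppred [Pdiv2]; rfProj 0]].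
Lemma c_strip : cmp 1 Pstrip (fun _ xs => strip (nth 0 xs 0)).
Proof.
  eapply cmp_ext. eapply cmp_comp3. apply c_ifz. apply cmp_proj. mono cmp_zero.
  eapply cmp_comp3. apply c_ifz. apply c_odd. eapply cmp_comp1. apply c_pred. apply c_div2.
  apply cmp_proj.
  intros p xs L. simpl. unfold strip. destruct (nth 0 xs 0); [reflexivity|].
  destruct (Nat.odd (S n)); reflexivity.
Qed.

Definition gg j c := Nat.iter j strip c.
Definition Pgg := rfPrimRec (rfProj 0) (rfComp Pstrip [rfProj 1]).
Lemma c_gg : cmp 2 Pgg (fun _ xs => gg (nth 0 xs 0) (nth 1 xs 0)).
Proof.
  eapply cmp_ext.
  - eapply (cmp_prec 1 _ _ _ _ (fun _ n ys => gg n (nth 0 ys 0))).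
    + apply cmp_proj.
    + eapply cmp_comp1. apply c_strip. mono cmp_proj.
    + reflexivity.
    + reflexivity.
  - fin.
Qed.

Definition active v := match v with 0 => 0 | S _ => if Nat.odd v then 0 else 1 end.
Definition Pactive := rfComp Pifz [rfProj 0; rfZero; rfComp Pisz [Podd]].
Lemma c_active : cmp 1 Pactive (fun _ xs => active (nth 0 xs 0)).
Proof.
  eapply cmp_ext. eapply cmp_comp3. apply c_ifz. apply cmp_proj. mono cmp_zero.
  eapply cmp_comp1. apply c_isz. apply c_odd.
  intros p xs L. simpl. unfold active. destruct (nth 0 xs 0); [reflexivity|].
  destruct (Nat.odd (S n)); reflexivity.
Qed.

Fixpoint cnt j u := match j with 0 => 0 | S t => cnt t u + active (gg t u) end.
Definition Pcnt2 := rfPrimRec rfZero (rfComp Padd [rfProj 1; rfComp Pactive [rfComp Pgg [rfProj 0; rfProj 2]]]).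
Lemma c_cnt2 : cmp 2 Pcnt2 (fun _ xs => cnt (nth 0 xs 0) (nth 1 xs 0)).
Proof.
  eapply cmp_ext.
  - eapply (cmp_prec 1 _ _ _ _ (fun _ n ys => cnt n (nth 0 ys 0))).
    + mono cmp_zero.
    + eapply cmp_comp2. apply c_add. mono cmp_proj.
      eapply cmp_comp1. apply c_active. eapply cmp_comp2. apply c_gg. mono cmp_proj. apply cmp_proj.
    + reflexivity.
    + reflexivity.
  - fin.
Qed.
Definition Pcnt := rfComp Pcnt2 [rfProj 0; rfProj 0].
Lemma c_cnt : cmp 1 Pcnt (fun _ xs => cnt (nth 0 xs 0) (nth 0 xs 0)).
Proof. eapply cmp_ext. eapply cmp_comp2. apply c_cnt2. apply cmp_proj. apply cmp_proj. fin. Qed.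

Definition dec (p : baire) c1 :=
  match gg c1 c1 with 0 => 1 | S _ => p (cpair (cnt c1 c1) (2 * Nat.div2 (gg c1 c1))) end.
Definition Pggd := rfComp Pgg [rfProj 0; rfProj 0].
Definition Pdec := rfComp Pifz [Pggd; Pone;
   rfComp rfOracle [rfComp Pcpair [Pcnt; rfComp Pdbl [rfComp Pdiv2 [Pggd]]]]].
Lemma c_dec : cmp 1 Pdec (fun p xs => dec p (nth 0 xs 0)).
Proof.
  assert (Hg : cmp 1 Pggd (fun _ xs => gg (nth 0 xs 0) (nth 0 xs 0))).
  { eapply cmp_ext. eapply cmp_comp2. apply c_gg. apply cmp_proj. apply cmp_proj. fin. }
  eapply cmp_ext. eapply cmp_comp3. apply c_ifz. apply Hg. mono c_one.
  eapply cmp_comp1. apply cmp_oracle. eapply cmp_comp2. apply c_cpair. apply c_cnt.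
  eapply cmp_comp1. apply c_dbl. eapply cmp_comp1. apply c_div2. apply Hg.
  intros p xs L. simpl. unfold dec. rewrite cpair_tri. reflexivity.
Qed.

Definition Tn (p : baire) c := match c with 0 => 0 | S _ => if Nat.odd c then dec p (Nat.div2 c) else 1 end.
Definition PTn := rfComp Pifz [rfProj 0; rfZero; rfComp Pifz [Podd; Pone; rfComp Pdec [Pdiv2]]].
Lemma c_Tn : cmp 1 PTn (fun p xs => Tn p (nth 0 xs 0)).
Proof.
  eapply cmp_ext. eapply cmp_comp3. apply c_ifz. apply cmp_proj. mono cmp_zero.
  eapply cmp_comp3. apply c_ifz. apply c_odd. mono c_one. eapply cmp_comp1. apply c_dec. apply c_div2.
  intros p xs L. simpl. unfold Tn. destruct (nth 0 xs 0); [reflexivity|].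
  destruct (Nat.odd (S n)); reflexivity.
Qed.

Lemma odd_2k2 k : Nat.odd (2*k+2) = false.
Proof. replace (2*k+2) with (2*(k+1)) by lia. apply Nat.odd_even. Qed.
Lemma div2_2k2 k : Nat.div2 (2*k+2) = k+1.
Proof. replace (2*k+2) with (2*(k+1)) by lia. apply Nat.div2_double. Qed.
Lemma odd_2k1 k : Nat.odd (2*k+1) = true.
Proof. apply Nat.odd_odd. Qed.
Lemma div2_2k1 k : Nat.div2 (2*k+1) = k.
Proof. replace (2*k+1) with (S (2*k)) by lia. apply Nat.div2_succ_double. Qed.

Lemma wcode_t w : wcode (true :: w) = 2 * wcode w + 2.
Proof. reflexivity. Qed.
Lemma wcode_f w : wcode (false :: w) = 2 * wcode w + 1.
Proof. reflexivity. Qed.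

Lemma strip_t w : strip (wcode (true :: w)) = wcode w.
Proof. rewrite wcode_t. unfold strip. destruct (2 * wcode w + 2) eqn:E; [lia|].
  rewrite <- E, odd_2k2, div2_2k2. lia. Qed.
Lemma strip_f w : strip (wcode (false :: w)) = wcode (false :: w).
Proof. rewrite wcode_f. unfold strip. destruct (2 * wcode w + 1) eqn:E; [lia|].
  rewrite <- E, odd_2k1. reflexivity. Qed.

Definition goodrest (rest : word) := rest = [] \/ exists w, rest = false :: w.

Lemma wdec v : exists m rest, v = repeat true m ++ rest /\ goodrest rest.
Proof.
  induction v as [|b v IH].
  - exists 0, []. split; [reflexivity|left; reflexivity].
  - destruct b.
    + destruct IH as [m [r [-> G]]]. exists (S m), r. split; auto.
    + exists 0, (false :: v). split; [reflexivity| right; eauto].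
Qed.

Lemma strip_rest r : goodrest r -> strip (wcode r) = wcode r.
Proof. intros [->|[w ->]]; [reflexivity|apply strip_f]. Qed.

Lemma gg_ones m r j : goodrest r ->
  gg j (wcode (repeat true m ++ r)) = wcode (repeat true (m - j) ++ r).
Proof.
  intros G. induction j.
  - rewrite Nat.sub_0_r. reflexivity.
  - unfold gg in *. simpl Nat.iter. rewrite IHj.
    destruct (m - j) as [|k] eqn:E.
    + replace (m - S j) with 0 by lia. simpl. apply strip_rest, G.
    + replace (m - S j) with k by lia. simpl repeat. simpl app. apply strip_t.
Qed.

Lemma active_ones k r : goodrest r -> active (wcode (repeat true k ++ r)) = if k =? 0 then 0 else 1.
Proof.
  intros G. destruct k.
  - simpl. destruct G as [->|[w ->]]; [reflexivity|].
    unfold active. rewrite wcode_f. destruct (2 * wcode w + 1) eqn:E; [lia|].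
    rewrite <- E, odd_2k1. reflexivity.
  - simpl repeat. simpl app. unfold active. rewrite wcode_t.
    destruct (2 * wcode (repeat true k ++ r) + 2) eqn:E; [lia|].
    rewrite <- E, odd_2k2. reflexivity.
Qed.

Lemma cnt_ones m r j : goodrest r -> cnt j (wcode (repeat true m ++ r)) = Nat.min j m.
Proof.
  intros G. induction j; [reflexivity|].
  simpl cnt. rewrite IHj, gg_ones, active_ones by exact G.
  destruct (Nat.eqb_spec (m - j) 0); lia.
Qed.

Lemma wcode_ones_ge m r : m <= wcode (repeat true m ++ r).
Proof. induction m; simpl repeat; simpl app; [lia|]. rewrite wcode_t. lia. Qed.

Lemma Tn_nil p : Tn p (wcode []) = 0.
Proof. reflexivity. Qed.
Lemma Tn_t p w : Tn p (wcode (true :: w)) = 1.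
Proof. unfold Tn. rewrite wcode_t. destruct (2 * wcode w + 2) eqn:E; [lia|].
  rewrite <- E, odd_2k2. reflexivity. Qed.

Lemma Tn_f p m r : goodrest r -> Tn p (wcode (false :: repeat true m ++ r)) =
  match r with [] => 1 | _ :: w => p (cpair m (2 * wcode w)) end.
Proof.
  intros G. unfold Tn. rewrite wcode_f.
  destruct (2 * wcode (repeat true m ++ r) + 1) eqn:E; [lia|].
  rewrite <- E, odd_2k1, div2_2k1. unfold dec.
  rewrite gg_ones by exact G. replace (m - wcode (repeat true m ++ r)) with 0
    by (pose proof (wcode_ones_ge m r); lia).
  rewrite cnt_ones by exact G.
  replace (Nat.min (wcode (repeat true m ++ r)) m) with m by (pose proof (wcode_ones_ge m r); lia).
  simpl repeat; simpl app.
  destruct G as [->|[w ->]]; [reflexivity|].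
  rewrite wcode_f. replace (2 * wcode w + 1) with (S (2 * wcode w)) by lia.
  rewrite Nat.div2_succ_double. reflexivity.
Qed.

Definition Cw m c := 2 * Nat.iter m (fun u => 2 * u + 2) (2 * c + 1) + 1.
Lemma Cw_wcode m w : Cw m (wcode w) = wcode (false :: repeat true m ++ false :: w).
Proof.
  assert (H : forall v, Nat.iter m (fun u => 2 * u + 2) (wcode v) = wcode (repeat true m ++ v)).
  { intros v. induction m; [reflexivity|]. rewrite Nat.iter_succ, IHm. reflexivity. }
  unfold Cw. rewrite wcode_f. rewrite <- H. reflexivity.
Qed.
Definition PCw2 := rfPrimRec (rfComp rfSucc [rfComp Pdbl [rfProj 0]])
   (rfComp rfSucc [rfComp rfSucc [rfComp Pdbl [rfProj 1]]]).
Definition PCw := rfComp rfSucc [rfComp Pdbl [PCw2]].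
Lemma c_Cw : cmp 2 PCw (fun _ xs => Cw (nth 0 xs 0) (nth 1 xs 0)).
Proof.
  eapply cmp_ext. eapply cmp_comp1. apply cmp_succ. eapply cmp_comp1. apply c_dbl.
  eapply (cmp_prec 1 _ _ _ _ (fun _ n ys => Nat.iter n (fun u => 2 * u + 2) (2 * nth 0 ys 0 + 1))).
  - eapply cmp_comp1. apply cmp_succ. eapply cmp_comp1. apply c_dbl. apply cmp_proj.
  - eapply cmp_comp1. apply cmp_succ. eapply cmp_comp1. apply cmp_succ. eapply cmp_comp1. apply c_dbl. mono cmp_proj.
  - intros; simpl; lia.
  - intros. rewrite Nat.iter_succ. cbn [nth]. lia.
  - intros p [|a xs] L; [simpl in L; lia|]. cbn [hd tl nth]. unfold Cw. lia.
Qed.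


Definition ccons (b : bool) (x : cantor) : cantor := fun n => match n with 0 => b | S n' => x n' end.
Definition lapp (w : word) (z : cantor) : cantor := fold_right ccons z w.

Lemma prefix_S' n x : prefix (S n) x = x 0 :: prefix n (fun i => x (S i)).
Proof. unfold prefix. simpl. f_equal. rewrite <- seq_shift, map_map. reflexivity. Qed.
Lemma prefix_S n x : prefix (S n) x = prefix n x ++ [x n].
Proof. unfold prefix. rewrite seq_S, map_app. reflexivity. Qed.

Lemma lapp_lt w z i : i < length w -> lapp w z i = nth i w false.
Proof. revert i; induction w; intros i H; simpl in *; [lia|]. destruct i; simpl; auto. apply IHw. lia. Qed.
Lemma lapp_ge w z j : lapp w z (length w + j) = z j.
Proof. induction w; simpl; auto. Qed.
Lemma prefix_lapp_le w z k : k <= length w -> prefix k (lapp w z) = firstn k w.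
Proof.
  revert k; induction w; intros k H; simpl in *.
  - destruct k; [reflexivity|lia].
  - destruct k; [reflexivity|]. rewrite prefix_S'. simpl. f_equal. apply IHw. lia.
Qed.
Lemma prefix_lapp w z j : prefix (length w + j) (lapp w z) = w ++ prefix j z.
Proof. induction w; simpl; auto. rewrite prefix_S'. simpl. f_equal. apply IHw. Qed.

Lemma prefix_0 (x : cantor) : prefix 0 x = [].
Proof. reflexivity. Qed.
Lemma prefix_const k : prefix k (fun _ => true) = repeat true k.
Proof. induction k; auto. rewrite prefix_S'. simpl. f_equal. apply IHk. Qed.

Lemma history_prefix d s1 s2 n : history d s1 s2 n = prefix n (play d s1 s2).
Proof.
  induction n; [reflexivity|]. simpl history. rewrite prefix_S, IHn. f_equal. f_equal.
  unfold play. rewrite IHn. reflexivity.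
Qed.

Lemma play_char (d : turnfun) (s1 s2 : strategy) (x : cantor) :
  (forall n, x n = (if d (prefix n x) then s1 (prefix n x) else s2 (prefix n x))) ->
  play d s1 s2 = x.
Proof.
  intros H.
  assert (Hh : forall n, history d s1 s2 n = prefix n x).
  { induction n; [reflexivity|]. simpl history. rewrite prefix_S, IHn, (H n). reflexivity. }
  extensionality n. unfold play. rewrite Hh. symmetry. apply H.
Qed.

Lemma play_eq (d : turnfun) (s1 s2 : strategy) j : play d s1 s2 j =
  (if d (prefix j (play d s1 s2)) then s1 (prefix j (play d s1 s2)) else s2 (prefix j (play d s1 s2))).
Proof. unfold play at 1. rewrite history_prefix. reflexivity. Qed.

Fixpoint dd (D : nat -> turnfun) (j : nat) (w : word) : bool :=
  match w with [] => false | true :: w' => dd D (S j) w' | false :: w' => D j w' end.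
Definition dcomb (D : nat -> turnfun) (w : word) : bool :=
  match w with [] => true | true :: _ => false | false :: w' => dd D 0 w' end.

Lemma dd_ones D j m r : dd D j (repeat true m ++ r) = dd D (j + m) r.
Proof. revert j; induction m; intros j; simpl. rewrite Nat.add_0_r; auto. rewrite IHm. f_equal. lia. Qed.

Lemma dcomb_ones D k : dcomb D (false :: repeat true k) = false.
Proof. simpl. rewrite <- (app_nil_r (repeat true k)), dd_ones. reflexivity. Qed.
Lemma dcomb_sub D m h : dcomb D (false :: repeat true m ++ false :: h) = D m h.
Proof. simpl. rewrite dd_ones. reflexivity. Qed.

Definition Scomb (As : nat -> cantor -> Prop) : cantor -> Prop :=
  tree_op (fun _ => unscale ([true], tree_op (fun m => As (pred m)))).

Lemma prepend1 z : prepend [true] z = ccons true z.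
Proof. extensionality n. unfold prepend. destruct n; simpl; [reflexivity|]. rewrite Nat.sub_0_r. reflexivity. Qed.

Definition shape m y := lapp (false :: repeat true m ++ [false]) y.

Lemma shape_len m : length (false :: repeat true m ++ [false]) = S (S m).
Proof. simpl. rewrite length_app, repeat_length. simpl. lia. Qed.

Lemma Scomb_shape As m y : Scomb As (shape m y) <-> As m y.
Proof.
  set (z := lapp (repeat true m ++ [false]) y).
  assert (Hz : shape m y = ccons false z) by reflexivity.
  assert (zt : forall i, i < m -> z i = true).
  { intros i Hi. unfold z. rewrite lapp_lt by (rewrite length_app, repeat_length; simpl; lia).
    rewrite app_nth1 by (rewrite repeat_length; lia). apply nth_repeat_lt; lia. }
  assert (zf : z m = false).
  { unfold z. rewrite lapp_lt by (rewrite length_app, repeat_length; simpl; lia).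
    rewrite app_nth2 by (rewrite repeat_length; lia). rewrite repeat_length, Nat.sub_diag. reflexivity. }
  assert (zs : shift (S m) z = y).
  { extensionality k. unfold shift, z. replace (S m + k) with (length (repeat true m ++ [false]) + k)
      by (rewrite length_app, repeat_length; simpl; lia). apply lapp_ge. }
  rewrite Hz. unfold Scomb, tree_op, unscale. simpl fst. simpl snd. split.
  - intros [[_ H]|[n [H1 [H2 H3]]]].
    + specialize (H m). simpl in H. congruence.
    + destruct n; [|specialize (H1 0); simpl in H1; discriminate (H1 ltac:(lia))].
      change (shift 1 (ccons false z)) with (fun k => z k) in H3.
      change (fun k => z k) with z in H3.
      rewrite prepend1 in H3.
      destruct H3 as [[H _]|[n [K1 [K2 K3]]]]; [discriminate H|].
      destruct n; [discriminate K2|]. simpl in K2.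
      assert (n = m).
      { destruct (Nat.lt_trichotomy n m) as [h|[h|h]]; auto.
        - rewrite zt in K2 by exact h. discriminate.
        - specialize (K1 (S m) ltac:(lia)). simpl in K1. congruence. }
      subst n. simpl pred in K3.
      change (shift (S (S m)) (ccons true z)) with (fun k => z (S m + k)) in K3.
      change (fun k => z (S m + k)) with (shift (S m) z) in K3. rewrite zs in K3. exact K3.
  - intros HA. right. exists 0. split; [intros; lia|]. split; [reflexivity|].
    change (shift 1 (ccons false z)) with (fun k => z k).
    change (fun k => z k) with z. rewrite prepend1.
    right. exists (S m). split; [|split].
    + intros i Hi. destruct i; [reflexivity|]. simpl. apply zt. lia.
    + simpl. exact zf.
    + change (shift (S (S m)) (ccons true z)) with (fun k => z (S m + k)).
      change (fun k => z (S m + k)) with (shift (S m) z). rewrite zs. exact HA.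
Qed.

Lemma Scomb_ones As : Scomb As (ccons false (fun _ => true)).
Proof. left. split; reflexivity. Qed.
Lemma Scomb_allones As : ~ Scomb As (fun _ => true).
Proof. intros [[H _]|[n [_ [H _]]]]; discriminate. Qed.

Lemma play_allones D s t : s [] = true -> (forall w, t (true :: w) = true) ->
  play (dcomb D) s t = (fun _ => true).
Proof.
  intros H1 H2. apply play_char. intros [|n].
  - rewrite prefix_0. simpl. rewrite H1. reflexivity.
  - rewrite prefix_S'. simpl. rewrite H2. reflexivity.
Qed.

Lemma play_ones D s t : s [] = false -> (forall k, t (false :: repeat true k) = true) ->
  play (dcomb D) s t = ccons false (fun _ => true).
Proof.
  intros H1 H2. apply play_char. intros [|n].
  - rewrite prefix_0. simpl. rewrite H1. reflexivity.
  - rewrite prefix_S'. simpl (ccons false (fun _ => true) 0).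
    change (fun i => ccons false (fun _ => true) (S i)) with (fun _ : nat => true).
    rewrite prefix_const, dcomb_ones, H2. reflexivity.
Qed.

Lemma firstn_rep (b : bool) m k : k <= m -> firstn k (repeat b m) = repeat b k.
Proof. revert m; induction k; intros m H; [reflexivity|]. destruct m; [lia|]. simpl. f_equal. apply IHk. lia. Qed.
Lemma firstn_rep_app m k (r : word) : k <= m -> firstn k (repeat true m ++ r) = repeat true k.
Proof.
  intros H. rewrite firstn_app, repeat_length. replace (k - m) with 0 by lia. simpl.
  rewrite app_nil_r. apply firstn_rep. lia.
Qed.

Lemma play_shape (D : nat -> turnfun) (s t : strategy) m (y : cantor) : s [] = false ->
  (forall k, k < m -> t (false :: repeat true k) = true) ->
  t (false :: repeat true m) = false ->
  (forall j, y j = (let h := prefix j y in if D m h then s (false :: repeat true m ++ false :: h)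
                       else t (false :: repeat true m ++ false :: h))) ->
  play (dcomb D) s t = shape m y.
Proof.
  intros H1 H2 H3 H4. apply play_char. intros n.
  destruct (Nat.lt_ge_cases n (S (S m))) as [Hn|Hn].
  - unfold shape. rewrite lapp_lt by (rewrite shape_len; lia).
    rewrite prefix_lapp_le by (rewrite shape_len; lia).
    destruct n as [|k]; [simpl; rewrite H1; reflexivity|].
    simpl firstn. simpl nth. rewrite firstn_rep_app by lia. rewrite dcomb_ones.
    destruct (Nat.lt_ge_cases k m).
    + rewrite H2 by lia. rewrite app_nth1 by (rewrite repeat_length; lia). apply nth_repeat_lt; lia.
    + replace k with m by lia. rewrite H3. rewrite app_nth2 by (rewrite repeat_length; lia).
      rewrite repeat_length, Nat.sub_diag. reflexivity.
  - replace n with (length (false :: repeat true m ++ [false]) + (n - S (S m)))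
      by (rewrite shape_len; lia).
    unfold shape. rewrite lapp_ge, prefix_lapp. rewrite H4. cbv zeta.
    replace ((false :: repeat true m ++ [false]) ++ prefix (n - S (S m)) y) with
      (false :: repeat true m ++ false :: prefix (n - S (S m)) y)
      by (simpl; rewrite <- app_assoc; reflexivity).
    rewrite dcomb_sub. reflexivity.
Qed.


Fixpoint Tsub (m : nat) (t : strategy) (j : nat) (w : word) : bool :=
  match w with [] => j <? m | true :: w' => Tsub m t (S j) w' | false :: w' => t w' end.
Lemma Tsub_ones m t j k r : Tsub m t j (repeat true k ++ r) = Tsub m t (j + k) r.
Proof. revert j; induction k; intros j; simpl. rewrite Nat.add_0_r; auto. rewrite IHk. f_equal. lia. Qed.

Lemma extract (D : nat -> turnfun) As (sg : strategy) :
  winning1 (dcomb D) (Scomb As) sg ->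
  forall m, winning1 (D m) (As m) (fun w => sg (false :: repeat true m ++ false :: w)).
Proof.
  intros W m t.
  assert (E0 : sg [] = false).
  { destruct (sg []) eqn:E; auto. exfalso. apply (Scomb_allones As).
    rewrite <- (play_allones D sg (fun _ => true) E (fun _ => eq_refl)). apply W. }
  set (T := fun w : word => match w with false :: w' => Tsub m t 0 w' | _ => true end).
  set (y := play (D m) (fun w => sg (false :: repeat true m ++ false :: w)) t).
  assert (HP : play (dcomb D) sg T = shape m y).
  { apply play_shape; auto.
    - intros k Hk. unfold T. rewrite <- (app_nil_r (repeat true k)), Tsub_ones. simpl.
      apply Nat.ltb_lt. exact Hk.
    - unfold T. rewrite <- (app_nil_r (repeat true m)), Tsub_ones. simpl. apply Nat.ltb_irrefl.
    - intros j. unfold y at 1. rewrite play_eq. fold y. cbv zeta.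
      unfold T. rewrite Tsub_ones. reflexivity. }
  apply (Scomb_shape As m y). rewrite <- HP. apply W.
Qed.

Fixpoint sig' (S1 : nat -> strategy) (j : nat) (w : word) : bool :=
  match w with [] => false | true :: w' => sig' S1 (S j) w' | false :: w' => S1 j w' end.
Definition sigc (S1 : nat -> strategy) (w : word) : bool :=
  match w with false :: w' => sig' S1 0 w' | _ => false end.
Lemma sig_ones S1 j k r : sig' S1 j (repeat true k ++ r) = sig' S1 (j + k) r.
Proof. revert j; induction k; intros j; simpl. rewrite Nat.add_0_r; auto. rewrite IHk. f_equal. lia. Qed.

Lemma least (P : nat -> Prop) : (exists n, P n) -> exists n, P n /\ forall k, k < n -> ~ P k.
Proof.
  intros [n Hn]. induction n as [n IH] using (well_founded_induction lt_wf).
  destruct (classic (exists k, k < n /\ P k)) as [[k [Hk Pk]]|H].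
  - apply (IH k Hk Pk).
  - exists n. split; auto. intros k Hk Pk. apply H. eauto.
Qed.

Lemma exists_win (D : nat -> turnfun) As (S1 : nat -> strategy) :
  (forall m, winning1 (D m) (As m) (S1 m)) -> winning1 (dcomb D) (Scomb As) (sigc S1).
Proof.
  intros W T. destruct (classic (forall k, T (false :: repeat true k) = true)) as [H|H].
  - rewrite play_ones; auto. apply Scomb_ones.
  - apply not_all_ex_not in H.
    destruct (least (fun k => T (false :: repeat true k) = false)) as [m [Hm Hl]].
    { destruct H as [k Hk]. exists k. destruct (T (false :: repeat true k)); congruence. }
    set (t := fun w => T (false :: repeat true m ++ false :: w)).
    set (y := play (D m) (S1 m) t).
    assert (HP : play (dcomb D) (sigc S1) T = shape m y).
    { apply play_shape; auto.
      - intros k Hk. specialize (Hl k Hk). destruct (T (false :: repeat true k)); congruence.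
      - intros j. unfold y at 1. rewrite play_eq. fold y. cbv zeta.
        simpl sigc. rewrite sig_ones. reflexivity. }
    rewrite HP. apply Scomb_shape. apply W.
Qed.

Lemma win_not_both (d : turnfun) A s1 s : winning1 d A s1 -> winning2 d A s -> False.
Proof. intros W1 W2. apply (W2 s1). apply W1. Qed.


Lemma cmp_computable e (f : baire -> nat -> nat) (F : pfun) :
  cmp 1 e (fun p xs => f p (nth 0 xs 0)) ->
  (forall p q, F p = Some q -> forall n, q n = f p n) -> computable F.
Proof.
  intros C HF. exists e. intros p q Hp n. rewrite (HF p q Hp n).
  apply (C p [n]). simpl; lia.
Qed.

Lemma join_odd p q k : join p q (2 * k + 1) = q k.
Proof. unfold join. rewrite Nat.even_odd, div2_2k1. reflexivity. Qed.
Lemma join_even p q k : join p q (2 * k) = p k.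
Proof. unfold join. rewrite Nat.even_even, Nat.div2_double. reflexivity. Qed.

Lemma comp_usnd (p : baire) i : (fun n => p (usnd (cpair i n))) = p.
Proof. extensionality n. rewrite usnd_cpair. reflexivity. Qed.

Lemma dir1 nm : weihrauch_le (FindWS nm) (parallelization (FindWS nm)).
Proof.
  exists (fun r => Some (fun n => r (2 * cpair 0 n + 1))).
  exists (fun p => Some (fun N => p (usnd N))).
  split; [|split].
  - apply (cmp_computable (rfComp rfOracle [rfComp rfSucc [rfComp Pdbl [rfComp Pcpair [rfZero; rfProj 0]]]])
      (fun r n => r (2 * cpair 0 n + 1))).
    + eapply cmp_ext. eapply cmp_comp1. apply cmp_oracle. eapply cmp_comp1. apply cmp_succ.
      eapply cmp_comp1. apply c_dbl. eapply cmp_comp2. apply c_cpair. mono cmp_zero. apply cmp_proj.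
      intros p xs L. rewrite cpair_tri. simpl. f_equal. lia.
    + intros p q E n. injection E as <-. reflexivity.
  - apply (cmp_computable (rfComp rfOracle [Pusnd]) (fun p N => p (usnd N))).
    + eapply cmp_ext. eapply cmp_comp1. apply cmp_oracle. apply c_usnd. intros; reflexivity.
    + intros p q E n. injection E as <-. reflexivity.
  - intros G HG p x Hpx [s Hs].
    destruct (HG (fun N => p (usnd N)) (fun _ => x)) as [q [Gq [ys [Hys Hpar]]]].
    + intros i. simpl. unfold component. rewrite comp_usnd. exact Hpx.
    + exists (fun _ => s). intros i. exact Hs.
    + exists (fun n => q (cpair 0 n)). split.
      * unfold pcomp. rewrite Gq. f_equal. extensionality n. apply join_odd.
      * exists (ys 0). split; [apply (Hys 0)|apply (Hpar 0)].
Qed.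


Lemma Tn_dcomb (p : baire) (D : nat -> turnfun) :
  (forall m w, D m w = (p (cpair m (2 * wcode w)) =? 0)) ->
  forall w, dcomb D w = (Tn p (wcode w) =? 0).
Proof.
  intros HD [|[|] v].
  - reflexivity.
  - rewrite Tn_t. reflexivity.
  - destruct (wdec v) as [m [r [-> G]]]. rewrite Tn_f by exact G.
    destruct G as [->|[w ->]].
    + rewrite app_nil_r, dcomb_ones. reflexivity.
    + rewrite dcomb_sub. apply HD.
Qed.

Definition r1 (p : baire) : baire := fun N => p (cpair (pred (ufst N)) (2 * usnd N + 1)).
Definition c1 := rfComp rfOracle [rfComp Pcpair [rfComp Ppred [Pufst];
                   rfComp rfSucc [rfComp Pdbl [Pusnd]]]].
Lemma c_r1 : cmp 1 c1 (fun p xs => r1 p (nth 0 xs 0)).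
Proof.
  eapply cmp_ext. eapply cmp_comp1. apply cmp_oracle. eapply cmp_comp2. apply c_cpair.
  eapply cmp_comp1. apply c_pred. apply c_ufst.
  eapply cmp_comp1. apply cmp_succ. eapply cmp_comp1. apply c_dbl. apply c_usnd.
  intros p xs L. unfold r1. rewrite cpair_tri. simpl. remember (usnd (nth 0 xs 0)) as u. replace (S (u + (u + 0))) with (u + (u + 0) + 1) by lia. reflexivity.
Qed.
Definition r2 (q : baire) : baire := fun N => match Nat.b2n (Nat.odd N) with 0 => 1 | S _ => q (Nat.div2 N) end.
Definition c2 := rfComp Pifz [Podd; Pone; rfComp rfOracle [Pdiv2]].
Lemma c_r2 : cmp 1 c2 (fun p xs => r2 p (nth 0 xs 0)).
Proof.
  eapply cmp_ext. eapply cmp_comp3. apply c_ifz. apply c_odd. mono c_one.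
  eapply cmp_comp1. apply cmp_oracle. apply c_div2.
  intros; reflexivity.
Qed.
Definition r3 (q : baire) : baire := fun N => q (usnd N).
Definition c3 := rfComp rfOracle [Pusnd].
Lemma c_r3 : cmp 1 c3 (fun p xs => r3 p (nth 0 xs 0)).
Proof. eapply cmp_ext. eapply cmp_comp1. apply cmp_oracle. apply c_usnd. intros; reflexivity. Qed.

Lemma ev1 e f : cmp 1 e (fun p xs => f p (nth 0 xs 0)) -> forall p n, eval p e [n] (f p n).
Proof. intros C p n. apply (C p [n]). simpl; lia. Qed.

Definition hout (p q3 : baire) : baire :=
  fun N => match Nat.b2n (Nat.odd N) with 0 => Tn p (Nat.div2 N) | S _ => q3 (Nat.div2 N) end.

Lemma hout_even p q k : hout p q (2 * k) = Tn p k.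
Proof. unfold hout. rewrite Nat.odd_even, Nat.div2_double. reflexivity. Qed.
Lemma hout_odd p q k : hout p q (2 * k + 1) = q k.
Proof. unfold hout. rewrite odd_2k1, div2_2k1. reflexivity. Qed.

Lemma dir2 nm (Hsa : standing_assumptions nm)
  (Htree : @computable_op (seq_space (gamma_space nm)) (gamma_space nm) tree_op) :
  weihrauch_le (parallelization (FindWS nm)) (FindWS nm).
Proof.
  destruct Htree as [Ft [[et Het] HFt]].
  destruct (sa_unscale nm Hsa) as [Fu [[eu Heu] HFu]].
  set (H2 := fun p => match Ft (r1 p) with
       | Some q1 => match Fu (r2 q1) with
         | Some q2 => match Ft (r3 q2) with
           | Some q3 => Some (hout p q3) | None => None end
         | None => None end
       | None => None end).
  exists (fun J => Some (fun N => J (2 * Cw (ufst N) (usnd N) + 1))).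
  exists H2.
  split; [|split].
  - apply (cmp_computable (rfComp rfOracle [rfComp rfSucc [rfComp Pdbl [rfComp PCw [Pufst; Pusnd]]]])
      (fun J N => J (2 * Cw (ufst N) (usnd N) + 1))).
    + eapply cmp_ext. eapply cmp_comp1. apply cmp_oracle. eapply cmp_comp1. apply cmp_succ.
      eapply cmp_comp1. apply c_dbl. eapply cmp_comp2. apply c_Cw. apply c_ufst. apply c_usnd.
      intros p xs L. simpl. f_equal. lia.
    + intros p q E n. injection E as <-. reflexivity.
  - set (E3 := subst (subst (subst et c3) (subst eu c2)) (subst et c1)).
    exists (rfComp Pifz [Podd; rfComp PTn [Pdiv2]; rfComp E3 [Pdiv2]]).
    intros p q HH N. unfold H2 in HH.
    destruct (Ft (r1 p)) as [q1|] eqn:E1; [|discriminate].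
    destruct (Fu (r2 q1)) as [q2|] eqn:E2; [|discriminate].
    destruct (Ft (r3 q2)) as [q3|] eqn:E3'; [|discriminate].
    injection HH as <-.
    assert (A1 : forall n, eval p (subst et c1) [n] (q1 n)).
    { intros n. apply (subst_ok p (r1 p)). intros m. apply (ev1 _ _ c_r1). apply (Het _ _ E1). }
    assert (A2 : forall n, eval q1 (subst eu c2) [n] (q2 n)).
    { intros n. apply (subst_ok q1 (r2 q1)). intros m. apply (ev1 _ _ c_r2). apply (Heu _ _ E2). }
    assert (A3 : forall n, eval q2 (subst et c3) [n] (q3 n)).
    { intros n. apply (subst_ok q2 (r3 q2)). intros m. apply (ev1 _ _ c_r3). apply (Het _ _ E3'). }
    assert (A : forall n, eval p E3 [n] (q3 n)).
    { intros n. unfold E3. apply (subst_ok p q1); [exact A1|].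
      apply (subst_ok q1 q2); [exact A2|]. apply A3. }
    econstructor.
    + constructor; [apply (ev1 Podd (fun _ n => Nat.b2n (Nat.odd n)) c_odd)|].
      constructor; [|constructor; [|constructor]].
      * econstructor; [constructor; [apply (ev1 Pdiv2 (fun _ n => Nat.div2 n) c_div2)|constructor]|]. apply (ev1 _ _ c_Tn).
      * econstructor; [constructor; [apply (ev1 Pdiv2 (fun _ n => Nat.div2 n) c_div2)|constructor]|]. apply A.
    + apply (c_ifz p [_; _; _]). simpl; lia.
  - intros G HG p xs Hp [ys0 Hys0].
    simpl in Hp.
    set (D := fun m => fst (xs m)). set (As := fun m => snd (xs m)).
    assert (Hdom : forall m, exists s, winning1 (D m) (As m) s).
    { intros m. destruct (Hys0 m) as [H _]. exact H. }
    destruct (functional_choice _ Hdom) as [S1 HS1].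
    destruct (HFt (r1 p) (fun m => As (pred m))) as [q1 [E1 N1]].
    { intros i. simpl. replace (component (r1 p) i) with (rhalf (component p (pred i))).
      - apply (Hp (pred i)).
      - extensionality n. unfold component, r1, rhalf. rewrite ufst_cpair, usnd_cpair. reflexivity. }
    destruct (HFu (r2 q1) ([true], tree_op (fun m => As (pred m)))) as [q2 [E2 N2]].
    { simpl. split.
      - split; [reflexivity|]. intros i Hi. destruct i; [|simpl in Hi; lia].
        unfold lhalf, r2. reflexivity.
      - replace (rhalf (r2 q1)) with q1; [exact N1|].
        extensionality n. unfold rhalf, r2. rewrite odd_2k1, div2_2k1. reflexivity. }
    destruct (HFt (r3 q2) (fun _ => unscale ([true], tree_op (fun m => As (pred m))))) as [q3 [E3 N3]].
    { intros i. simpl. replace (component (r3 q2) i) with q2; [exact N2|].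
      extensionality n. unfold component, r3. rewrite usnd_cpair. reflexivity. }
    assert (HH : H2 p = Some (hout p q3)).
    { unfold H2. rewrite E1, E2, E3. reflexivity. }
    destruct (HG (hout p q3) (dcomb D, Scomb As)) as [q [Gq [sg [Hsg Hfind]]]].
    + simpl. split.
      * intros w. unfold lhalf. rewrite hout_even. apply Tn_dcomb.
        intros m w'. destruct (Hp m) as [Ht _]. apply Ht.
      * replace (rhalf (hout p q3)) with q3; [exact N3|].
        extensionality n. unfold rhalf. rewrite hout_odd. reflexivity.
    + exists (sigc S1). split.
      * exists (sigc S1). apply exists_win. exact HS1.
      * left. apply exists_win. exact HS1.
    + assert (Wsg : winning1 (dcomb D) (Scomb As) sg).
      { destruct Hfind as [_ [W|W]]; [exact W|].
        exfalso. apply (win_not_both _ _ _ _ (exists_win D As S1 HS1) W). }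
      exists (fun N => q (Cw (ufst N) (usnd N))). split.
      * unfold pcomp. rewrite HH, Gq. f_equal. extensionality N. apply join_odd.
      * exists (fun m w => sg (false :: repeat true m ++ false :: w)). split.
        -- intros i w. simpl. unfold component. rewrite ufst_cpair, usnd_cpair, Cw_wcode.
           apply Hsg.
        -- intros i. split; [apply Hdom|]. left. exact (extract D As sg Wsg i).
Qed.


Theorem proposition20 (nm : pointclass_name)
  (Hsa : standing_assumptions nm)
  (Htree : @computable_op (seq_space (gamma_space nm)) (gamma_space nm) tree_op) :
  weihrauch_equiv (FindWS nm) (parallelization (FindWS nm)).
Proof.
  split; [apply dir1 | apply dir2; assumption].
Qed.
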